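(* Let $m>0$, $\alpha>0$ and $\omega\ge 0$, and let $(\phi(t),\gamma(t),k(t))_{t\ge0}$ be a trajectory of the dynamical system \[ \frac{d\phi}{dt}=\gamma,\qquad \frac{d\gamma}{dt}=\frac{1}{m}\bigl(-\gamma+\omega-k\sin\phi\bigr),\qquad \frac{dk}{dt}=\alpha\cos\phi-k, \] with initial condition $(\phi(0),\gamma(0),k(0))=(\phi_0,\gamma_0,k_0)$, where $\phi$ is an angle (taken modulo $2\pi$ in $[-\pi,\pi)$) and $\gamma,k\in\mathbb{R}$. Then for every $\epsilon>0$ there exists a time $T_\epsilon\ge 0$ such that $|k(t)|\le \alpha+\epsilon$ and $|\gamma(t)|\le \omega+\alpha+\epsilon$ for all $t\ge T_\epsilon$.
   Context: This system describes the phase difference $\phi$, its derivative $\gamma$, and the (rescaled) adaptive coupling strength $k$ of two identical-mass Kuramoto oscillators with inertia and Hebbian learning; $m$ is the (rescaled) mass, $\alpha$ the learning enhancement factor, and $\omega$ the intrinsic-frequency difference (the paper assumes $\omega\ge 0$ throughout). *)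

(* Defs.v *)
From Stdlib Require Import Reals.
Open Scope R_scope.

Definition right_cont_at0 (f : R -> R) : Prop :=
  forall eps, 0 < eps -> exists delta, 0 < delta /\
    forall t, 0 <= t < delta -> Rabs (f t - f 0) < eps.

Definition is_trajectory (m alpha omega : R) (phi gamma k : R -> R) : Prop :=
  (forall t, 0 < t ->
     derivable_pt_lim phi t (gamma t) /\
     derivable_pt_lim gamma t ((- gamma t + omega - k t * sin (phi t)) / m) /\
     derivable_pt_lim k t (alpha * cos (phi t) - k t)) /\
  right_cont_at0 phi /\ right_cont_at0 gamma /\ right_cont_at0 k.

(* Main.v *)
Require Import Defs.
From Stdlib Require Import Reals Lra Psatz.
Open Scope R_scope.

Lemma decay_upper (f df : R -> R) (a B s : R) :
  0 < a ->
  (forall t, s <= t -> derivable_pt_lim f t (df t)) ->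
  (forall t, s <= t -> df t <= - a * (f t - B)) ->
  forall t, s <= t -> f t - B <= exp (- (a * (t - s))) * (f s - B).
Proof.
  intros Ha Hd Hb t Ht.
  set (h := fun x => exp (a * x) * (f x - B)).
  set (dh := fun x => exp (a * x) * a * (f x - B) + exp (a * x) * df x).
  assert (Hdh : forall x, s <= x -> derivable_pt_lim h x (dh x)).
  { intros x Hx. unfold h, dh.
    apply (derivable_pt_lim_mult (fun y => exp (a * y)) (fun y => f y - B)).
    - apply (derivable_pt_lim_comp (fun y => a * y) exp x a (exp (a * x))).
      + pose proof (derivable_pt_lim_scal id a x 1 (derivable_pt_lim_id x)) as D.
        rewrite Rmult_1_r in D. exact D.
      + apply derivable_pt_lim_exp.
    - replace (df x) with (df x - 0) by ring.
      apply derivable_pt_lim_minus. now apply Hd. apply derivable_pt_lim_const. }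
  assert (Hle : h t <= h s).
  { destruct (Req_dec t s) as [E|E]. subst; lra.
    destruct (MVT_cor2 h dh s t) as [c [Hc1 Hc2]]. lra.
    intros c Hc. apply Hdh. lra.
    assert (dh c <= 0).
    { unfold dh. specialize (Hb c ltac:(lra)). pose proof (exp_pos (a*c)).
      assert (exp (a*c) * (a * (f c - B) + df c) <= 0).
      { assert (a * (f c - B) + df c <= 0) by lra. nra. }
      nra. }
    nra. }
  unfold h in Hle.
  assert (E : exp (- (a * (t - s))) * exp (a * t) = exp (a * s)).
  { rewrite <- exp_plus. f_equal. ring. }
  pose proof (exp_pos (a*t)). pose proof (exp_pos (- (a * (t - s)))).
  apply (Rmult_le_reg_l (exp (a*t))). lra.
  replace (exp (a * t) * (exp (- (a * (t - s))) * (f s - B))) with (exp (a*s) * (f s - B)) by (rewrite <- E; ring).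
  lra.
Qed.

Lemma decay_lower (f df : R -> R) (a B s : R) :
  0 < a ->
  (forall t, s <= t -> derivable_pt_lim f t (df t)) ->
  (forall t, s <= t -> - a * (f t - B) <= df t) ->
  forall t, s <= t -> exp (- (a * (t - s))) * (f s - B) <= f t - B.
Proof.
  intros Ha Hd Hb t Ht.
  pose proof (decay_upper (fun x => - f x) (fun x => - df x) a (- B) s Ha) as U.
  assert (H := U (fun x Hx => derivable_pt_lim_opp f x (df x) (Hd x Hx))
               (fun x Hx => ltac:(specialize (Hb x Hx); lra)) t Ht).
  simpl in H. lra.
Qed.

Lemma exp_small (C eps x : R) : 0 <= C -> 0 < eps -> C / eps <= x -> exp (- x) * C <= eps.
Proof.
  intros HC He Hx. rewrite exp_Ropp.
  pose proof (exp_ineq1_le x). pose proof (exp_pos x).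
  assert (C <= eps * exp x).
  { assert (C = eps * (C / eps)) by (field; lra). nra. }
  apply (Rmult_le_reg_l (exp x)). lra.
  replace (exp x * (/ exp x * C)) with C by (field; lra). lra.
Qed.

Theorem theorem1 (m alpha omega phi0 gamma0 k0 : R) (phi gamma k : R -> R) :
  0 < m -> 0 < alpha -> 0 <= omega ->
  is_trajectory m alpha omega phi gamma k ->
  phi 0 = phi0 -> gamma 0 = gamma0 -> k 0 = k0 ->
  forall eps, 0 < eps -> exists T, 0 <= T /\
    forall t, T <= t -> Rabs (k t) <= alpha + eps /\ Rabs (gamma t) <= omega + alpha + eps.
Proof.
  intros Hm Ha Ho [D _] _ _ _ eps He.
  set (C1 := Rabs (k 1) + alpha).
  set (T1 := 1 + C1 / (eps / 2)).
  assert (HC1 : 0 <= C1) by (unfold C1; pose proof (Rabs_pos (k 1)); lra).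
  assert (HT1 : 1 <= T1) by (unfold T1; assert (0 <= C1 / (eps/2)) by (unfold Rdiv; apply Rmult_le_pos; [lra | left; apply Rinv_0_lt_compat; lra]); lra).
  assert (Kb : forall t, T1 <= t -> Rabs (k t) <= alpha + eps / 2).
  { intros t Ht.
    assert (Dk : forall x, 1 <= x -> derivable_pt_lim k x (alpha * cos (phi x) - k x))
      by (intros x Hx; apply (D x ltac:(lra))).
    pose proof (decay_upper k _ 1 alpha 1 Rlt_0_1 Dk
      (fun x _ => ltac:(pose proof (COS_bound (phi x)); nra)) t ltac:(lra)) as U.
    pose proof (decay_lower k _ 1 (- alpha) 1 Rlt_0_1 Dk
      (fun x _ => ltac:(pose proof (COS_bound (phi x)); nra)) t ltac:(lra)) as L.
    pose proof (exp_small C1 (eps/2) (1 * (t - 1)) HC1 ltac:(lra) ltac:(unfold T1 in Ht; lra)) as S.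
    pose proof (exp_pos (- (1 * (t - 1)))).
    pose proof (Rle_abs (k 1)). pose proof (Rabs_pos (k 1)).
    assert (- Rabs (k 1) <= k 1) by (rewrite <- Rabs_Ropp; pose proof (Rle_abs (- k 1)); lra).
    unfold C1 in S.
    apply Rabs_le. split; nra. }
  set (B := omega + alpha + eps / 2).
  set (C2 := Rabs (gamma T1) + B).
  set (T := T1 + m * (C2 / (eps / 2))).
  assert (HC2 : 0 <= C2) by (unfold C2, B; pose proof (Rabs_pos (gamma T1)); lra).
  assert (HX2 : 0 <= C2 / (eps/2)) by (unfold Rdiv; apply Rmult_le_pos; [lra | left; apply Rinv_0_lt_compat; lra]).
  assert (HT : T1 <= T) by (unfold T; nra).
  exists T. split. lra.
  intros t Ht. split. pose proof (Kb t ltac:(lra)); lra.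
  assert (Dg : forall x, T1 <= x -> derivable_pt_lim gamma x
            ((- gamma x + omega - k x * sin (phi x)) / m))
    by (intros x Hx; apply (D x ltac:(lra))).
  assert (KS : forall x, T1 <= x -> - (alpha + eps/2) <= k x * sin (phi x) <= alpha + eps/2).
  { intros x Hx. pose proof (Kb x Hx). pose proof (SIN_bound (phi x)).
    pose proof (Rle_abs (k x)).
    assert (- Rabs (k x) <= k x) by (rewrite <- Rabs_Ropp; pose proof (Rle_abs (- k x)); lra).
    split; nra. }
  assert (Hm1 : 0 < 1 / m) by (apply Rdiv_lt_0_compat; lra).
  pose proof (decay_upper gamma _ (1/m) B T1 Hm1 Dg
      (fun x Hx => ltac:(pose proof (KS x Hx);
         unfold Rdiv; rewrite Rmult_1_l;
         assert (- (/ m) * (gamma x - B) - (- gamma x + omega - k x * sin (phi x)) * / m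
           = / m * (B - omega + k x * sin (phi x))) by ring;
         pose proof (Rinv_0_lt_compat m Hm); unfold B in *; nra)) t ltac:(lra)) as U.
  pose proof (decay_lower gamma _ (1/m) (- B) T1 Hm1 Dg
      (fun x Hx => ltac:(pose proof (KS x Hx);
         unfold Rdiv; rewrite Rmult_1_l;
         assert ((- gamma x + omega - k x * sin (phi x)) * / m - (- (/ m) * (gamma x - - B))
           = / m * (B + omega - k x * sin (phi x))) by ring;
         pose proof (Rinv_0_lt_compat m Hm); unfold B in *; nra)) t ltac:(lra)) as L.
  assert (Hx : C2 / (eps / 2) <= 1 / m * (t - T1)).
  { unfold T in Ht. replace (1 / m * (t - T1)) with ((t - T1) / m) by (field; lra).
    apply (Rmult_le_reg_l m). lra. replace (m * ((t - T1) / m)) with (t - T1) by (field; lra). lra. }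
  pose proof (exp_small C2 (eps/2) _ HC2 ltac:(lra) Hx) as S.
  pose proof (exp_pos (- (1 / m * (t - T1)))).
  pose proof (Rle_abs (gamma T1)).
  assert (- Rabs (gamma T1) <= gamma T1) by (rewrite <- Rabs_Ropp; pose proof (Rle_abs (- gamma T1)); lra).
  unfold C2 in S. unfold B in *.
  apply Rabs_le. split; nra.
Qed.
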